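(* Let $A\in\mathbb R^{n\times n}$ be tridiagonal, $n\ge2$, let $Q\in\mathbb R^{2n\times 2n}$ be the orthogonal matrix produced by Algorithm 1 (described in the context) applied to $A$, and set $Q_1=Q(1{:}n,1{:}n)$, $Q_2=Q(n{+}1{:}2n,1{:}n)$. Then for every $1\le k<n$, both $(Q_1Q_2^{T})(1{:}k,\,k{+}1{:}n)$ and $(Q_1Q_2^{T})(k{+}1{:}n,\,1{:}k)$ have rank at most $2$.
   Context: A Givens rotation on rows $p\ne q$ is an orthogonal matrix $G\in\mathbb R^{2n\times 2n}$ equal to the identity except in the entries $(p,p),(p,q),(q,p),(q,q)$, which form a $2\times2$ rotation $\begin{bmatrix}c&s\\-s&c\end{bmatrix}$, $c^2+s^2=1$. ''Rotate rows $p,q$ to annihilate $R(q,j)$'' means: choose such a $G$ for which $(G^{T}R)(q,j)=0$ and then update $R\leftarrow G^{T}R$, $Q\leftarrow QG$. Algorithm 1: Initialize $Q=I_{2n}$ and $R=\begin{bmatrix}A\\ I_n\end{bmatrix}\in\mathbb R^{2n\times n}$. First rotate rows $1,n+1$ to annihilate $R(n+1,1)$; then rotate rows $1,2$ to annihilate $R(2,1)$. Then for $i=2,\dots,n$: (a) rotate rows $n+1,n+i$ to annihilate $R(n+i,i)$; (b) rotate rows $i,n+1$ to annihilate $R(n+1,i)$; (c) if $i<n$, rotate rows $i,i+1$ to annihilate $R(i+1,i)$. On output $QR=\begin{bmatrix}A\\ I\end{bmatrix}$ with $R$ upper triangular. Notation $M(a{:}b,c{:}d)$ denotes the submatrix with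 rows $a,\dots,b$ and columns $c,\dots,d$. *)

(* Defs.v *)
(* Real numbers are modelled by an arbitrary real closed field. *)
From HB Require Import structures.
From mathcomp Require Import all_boot all_order all_algebra.
Set Implicit Arguments. Unset Strict Implicit. Unset Printing Implicit Defensive.
Import Order.TTheory GRing.Theory Num.Theory.
Local Open Scope ring_scope.

(* All row/column indices below are 0-based (paper index minus one). *)

Definition givens (R : ringType) (m p q : nat) (c s : R) : 'M[R]_m :=
  \matrix_(i < m, j < m)
    if (i == p :> nat) && (j == p :> nat) then c
    else if (i == p :> nat) && (j == q :> nat) then s
    else if (i == q :> nat) && (j == p :> nat) then - s
    else if (i == q :> nat) && (j == q :> nat) then c
    else (i == j)%:R.

(* The list of steps (p, q, j) of Algorithm 1 ("rotate rows p,q to annihilate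
   R(q,j)"), 0-based, for an n x n matrix A. *)
Definition alg1_steps (n : nat) : seq (nat * nat * nat) :=
  [:: (0, n, 0); (0, 1, 0)]%N ++
  flatten [seq [:: (n, n + i, i); (i, n, i)]%N ++
               (if (i < n.-1)%N then [:: (i, i.+1, i)] else [::])
          | i <- iota 1 n.-1].

Fixpoint alg1_run (R : rcfType) (n : nat) (steps : seq (nat * nat * nat))
    (Q : 'M[R]_(n + n)) (Rm : 'M[R]_(n + n, n))
    (Q' : 'M[R]_(n + n)) (Rm' : 'M[R]_(n + n, n)) : Prop :=
  match steps with
  | [::] => Q' = Q /\ Rm' = Rm
  | (p, q, jc) :: st =>
      exists c s : R, c ^+ 2 + s ^+ 2 = 1 /\
        let G := givens (n + n) p q c s in
        (forall (a : 'I_(n + n)) (b : 'I_n), (a : nat) = q -> (b : nat) = jc ->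
            (G^T *m Rm) a b = 0) /\
        alg1_run st (Q *m G) (G^T *m Rm) Q' Rm'
  end.

Definition alg1_output (R : rcfType) (n : nat) (A : 'M[R]_n) (Q : 'M[R]_(n + n)) : Prop :=
  exists Rm : 'M[R]_(n + n, n),
    alg1_run (alg1_steps n) 1%:M (col_mx A 1%:M) Q Rm.

Definition tridiagonal (R : ringType) (n : nat) (A : 'M[R]_n) : Prop :=
  forall i j : 'I_n, (i.+1 < j)%N \/ (j.+1 < i)%N -> A i j = 0.

Definition first_idx (n : nat) (k : 'I_n) (i : 'I_k) : 'I_n :=
  widen_ord (ltnW (ltn_ord k)) i.

Lemma last_idx_proof (n k : nat) (j : 'I_(n - k)) : (k + j < n)%N.
Proof. by have := ltn_ord j; rewrite ltn_subRL. Qed.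

Definition last_idx (n : nat) (k : 'I_n) (j : 'I_(n - k)) : 'I_n :=
  Ordinal (last_idx_proof j).

(* Main.v *)
Require Import Defs.
From HB Require Import structures.
From mathcomp Require Import all_boot all_order all_algebra zify ring.
Set Implicit Arguments. Unset Strict Implicit. Unset Printing Implicit Defensive.
Import Order.TTheory GRing.Theory Num.Theory.
Local Open Scope ring_scope.

Lemma rank_mxsub (F : fieldType) m n m' n' (f : 'I_m' -> 'I_m) (g : 'I_n' -> 'I_n)
  (A : 'M[F]_(m, n)) : (\rank (mxsub f g A) <= \rank A)%N.
Proof.
have -> : mxsub f g A = mxsub f g (1%:M *m A) by rewrite mul1mx.
rewrite mxsub_mul; apply: leq_trans (mxrankM_maxr _ _) _.
have -> : colsub g A = colsub g (A *m 1%:M) by rewrite mulmx1.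
rewrite -mulmx_colsub; exact: mxrankM_maxl.
Qed.

Lemma rank_inv_block (F : fieldType) N (K L D E : 'M[F]_N) :
  K *m L = 1%:M -> D + E = 1%:M -> D *m D = D -> E *m E = E ->
  D *m E = 0 -> E *m D = 0 ->
  (\rank (D *m L *m E) <= \rank (D *m K *m E))%N.
Proof.
move=> KL DE DD EE DE0 ED0.
have hX : kermx (D *m K *m E) *m D *m K *m E = 0 by rewrite -!mulmxA mulmxA mulmx_ker.
suff : (\rank (kermx (D *m K *m E)) <= \rank (kermx (D *m L *m E)))%N.
  rewrite !mxrank_ker.
  have := rank_leq_row (D *m L *m E); have := rank_leq_row (D *m K *m E).
  lia.
move: (kermx (D *m K *m E)) hX => X hX.
have hD : D = 1%:M - E by rewrite -DE addrK.
have KLl Y : Y *m K *m L = Y by rewrite -mulmxA KL mulmx1.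
have DDl Y : Y *m D *m D = Y *m D by rewrite -mulmxA DD.
have EEl Y : Y *m E *m E = Y *m E by rewrite -mulmxA EE.
have DEl Y : Y *m D *m E = 0 by rewrite -mulmxA DE0 mulmx0.
have EDl Y : Y *m E *m D = 0 by rewrite -mulmxA ED0 mulmx0.
have keyl : X *m D *m K *m D = X *m D *m K.
  by rewrite {2}hD mulmxBr mulmx1 hX subr0.
have c1 : X *m (D *m K *m D + E) *m (D *m L *m D + E) = X.
  rewrite !(mulmxDl, mulmxDr) !mulmxA !DDl keyl KLl DDl hX EDl !mul0mx EEl.
  by rewrite addr0 add0r -mulmxDr DE mulmx1.
have c2 : X *m (D *m K *m D + E) *m (D *m L *m E) = 0.
  rewrite !(mulmxDl, mulmxDr) !mulmxA !DDl keyl KLl DEl EDl !mul0mx.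
  by rewrite addr0.
rewrite -{1}c1; apply: leq_trans (mxrankM_maxl _ _) _.
by apply: mxrankS; apply/sub_kermxP.
Qed.

Section Giv.
Variables (R : comNzRingType) (N p q : nat) (c s : R).
Local Notation G := (givens N p q c s).

Lemma gcol (k a : 'I_N) : (a != p :> nat) -> (a != q :> nat) -> G k a = (k == a)%:R.
Proof. by move=> /negbTE ap /negbTE aq; rewrite /givens mxE ap aq !andbF. Qed.

Lemma grow (k a : 'I_N) : (k != p :> nat) -> (k != q :> nat) -> G k a = (k == a)%:R.
Proof. by move=> /negbTE kp /negbTE kq; rewrite /givens mxE kp kq. Qed.

Lemma sum_delta (f : 'I_N -> R) (i : 'I_N) : \sum_k (k == i)%:R * f k = f i.
Proof.
rewrite (bigD1 i) //= eqxx mul1r big1 ?addr0 // => k /negbTE ->; by rewrite mul0r.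
Qed.

Lemma rot_zero (m : nat) (Rm : 'M[R]_(N, m)) (a : 'I_N) (b : 'I_m) :
  (forall k : 'I_N, [|| k == a, (k == p :> nat) | (k == q :> nat)] -> Rm k b = 0) ->
  (G^T *m Rm) a b = 0.
Proof.
move=> H; rewrite mxE big1 // => k _; rewrite mxE.
case Hk: [|| k == a, (k == p :> nat) | (k == q :> nat)]; first by rewrite H // mulr0.
move/negbT: Hk; rewrite !negb_or => /and3P[ka kp kq].
by rewrite grow // (negbTE ka) mul0r.
Qed.

Lemma rot_other (m : nat) (Rm : 'M[R]_(N, m)) (a : 'I_N) (b : 'I_m) :
  (a != p :> nat) -> (a != q :> nat) -> (G^T *m Rm) a b = Rm a b.
Proof.
move=> ap aq; rewrite mxE.
under eq_bigr do rewrite mxE gcol //.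
exact: sum_delta.
Qed.

Lemma givens_orth : p != q -> (p < N)%N -> (q < N)%N -> c ^+ 2 + s ^+ 2 = 1 ->
  G^T *m G = 1%:M.
Proof.
move=> pq hp hq cs.
apply/matrixP => i j; rewrite !mxE.
under eq_bigr do rewrite mxE.
case: (boolP ((i == p :> nat) || (i == q :> nat))) => hi; last first.
  move: hi; rewrite negb_or => /andP[ip iq].
  under eq_bigr do rewrite gcol //.
  rewrite sum_delta grow //.
case: (boolP ((j == p :> nat) || (j == q :> nat))) => hj; last first.
  move: hj; rewrite negb_or => /andP[jp jq].
  under eq_bigr do rewrite [G _ j]gcol // mulrC.
  rewrite sum_delta grow //.
  have -> : (j == i) = false.
    apply/negP => /eqP ji; move: hi; rewrite -ji; by rewrite (negbTE jp) (negbTE jq).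
  have -> : (i == j) = false.
    apply/negP => /eqP ji; move: hi; rewrite ji; by rewrite (negbTE jp) (negbTE jq).
  done.
have pq' : (Ordinal hp != Ordinal hq) by [].
rewrite (bigD1 (Ordinal hp)) // (bigD1 (Ordinal hq)) /=; last by rewrite eq_sym.
rewrite big1; last first.
  move=> k /andP[kP kQ].
  have kp : (k != p :> nat) by apply: contra kP => /eqP h; apply/eqP/val_inj.
  have kq : (k != q :> nat) by apply: contra kQ => /eqP h; apply/eqP/val_inj.
  rewrite grow // grow //.
  case: (eqVneq k i) => [ki|_]; last by rewrite mul0r.
  by move: hi; rewrite -ki (negbTE kp) (negbTE kq).
rewrite addr0 /givens !mxE /= !eqxx /=.
have qp : (q == p) = false by rewrite eq_sym (negbTE pq).
case/orP: hi => /eqP hi; case/orP: hj => /eqP hj.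
- have -> : i == j by apply/eqP/ord_inj; rewrite hi hj.
  rewrite hi hj !eqxx (negbTE pq) qp /= ?eqxx. rewrite -cs; ring.
- have -> : (i == j) = false by apply/negP => /eqP ij; move: pq; rewrite -hi -hj ij eqxx.
  rewrite hi hj !eqxx (negbTE pq) qp /= ?eqxx. ring.
- have -> : (i == j) = false by apply/negP => /eqP ij; move: pq; rewrite -hi -hj ij eqxx.
  rewrite hi hj !eqxx (negbTE pq) qp /= ?eqxx. ring.
- have -> : i == j by apply/eqP/ord_inj; rewrite hi hj.
  rewrite hi hj !eqxx ?(negbTE pq) ?qp /= ?eqxx. rewrite -cs; ring.
Qed.
End Giv.

Definition Inv (R : rcfType) n (Z : nat -> nat -> bool) (Rm : 'M[R]_(n + n, n)) :=
  forall (a : 'I_(n + n)) (b : 'I_n), Z a b -> Rm a b = 0.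

Definition ST (R : rcfType) n (A : 'M[R]_n) Z (Q : 'M[R]_(n + n)) Rm :=
  Q *m Rm = col_mx A 1%:M /\ Q^T *m Q = 1%:M /\ Inv Z Rm.

Lemma ST_weaken (R : rcfType) n (A : 'M[R]_n) (Z Z' : nat -> nat -> bool) Q Rm :
  (forall a b, (a < n + n)%N -> (b < n)%N -> Z' a b -> Z a b) -> ST A Z Q Rm -> ST A Z' Q Rm.
Proof.
move=> h [h1 [h2 h3]]; split => //; split => // a b z; apply: h3; exact: h.
Qed.

Lemma step_lemma (R : rcfType) n (A : 'M[R]_n) (Zb Za : nat -> nat -> bool) p q jc st Q Rm Q' Rm' :
  p != q -> (p < n + n)%N -> (q < n + n)%N ->
  (forall a b : nat, (a < n + n)%N -> (b < n)%N -> Za a b ->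
     if (a == p) || (a == q) then ((a == q) && (b == jc)) || (Zb p b && Zb q b) else Zb a b) ->
  ST A Zb Q Rm -> alg1_run ((p, q, jc) :: st) Q Rm Q' Rm' ->
  exists Q1 R1, ST A Za Q1 R1 /\ alg1_run st Q1 R1 Q' Rm'.
Proof.
move=> pq hp hq hZ [hQR [hO hI]] /= [c [s [cs H]]].
move: H => /= [hann hrun].
set G := givens (n + n) p q c s.
exists (Q *m G), (G^T *m Rm); split => //.
have GG : G^T *m G = 1%:M by apply: givens_orth.
have GG' : G *m G^T = 1%:M := mulmx1C GG.
split; [| split].
- by rewrite -mulmxA (mulmxA G) GG' mul1mx.
- by rewrite trmx_mul -mulmxA (mulmxA Q^T) hO mul1mx GG.
- move=> a b hz; have := hZ a b (ltn_ord a) (ltn_ord b) hz; case: ifP => hpq.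
  + case/orP => [/andP[/eqP aq /eqP bj] | /andP[zp zq]]; first exact: hann.
    apply: rot_zero => k /or3P[/eqP->|/eqP kp|/eqP kq]; apply: hI.
    * by case/orP: hpq => /eqP ->.
    * by rewrite kp.
    * by rewrite kq.
  + move/negbT: hpq; rewrite negb_or => /andP[ap aq] zb.
    by rewrite rot_other // hI.
Qed.

Definition Z0 (n a b : nat) : bool := (((a < n) && ((b.+1 < a) || (a.+1 < b))) || ((n <= a) && (a != n + b)))%N.
Definition Z1 (n a b : nat) : bool := ((a == n) && (b != 1%N)) || ((a != n) && Z0 n a b).
Definition Zinv (n i a b : nat) : bool := ([|| (a == i) && (b != i) && (b != i.+1), (a == n) && (b != i),
  (n + i <= a) && (a != n + b), (n < a < n + i) | (i < a < n) && ((b.+1 < a) || (a.+1 < b))])%N.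
Definition Za (n i a b : nat) : bool := Zinv n i a b || (a == n + i)%N.
Definition Zb (n i a b : nat) : bool := ([|| (a == i) && (b != i) && (b != i.+1), (a == n) && (b != i.+1),
  (n + i <= a) && (a != n + b), (n < a < n + i), a == n + i | (i < a < n) && ((b.+1 < a) || (a.+1 < b))])%N.

Ltac zcheck := move=> a b ha hb; rewrite /Zb /Za /Zinv /Z1 /Z0; case: ifP; lia.

Section Chk.
Local Open Scope nat_scope.
Lemma chk1 n : (2 <= n)%N -> forall a b : nat, (a < n + n)%N -> (b < n)%N -> Z1 n a b ->
  if (a == 0) || (a == n) then ((a == n) && (b == 0)) || (Z0 n 0 b && Z0 n n b) else Z0 n a b.
Proof. move=> hn; zcheck. Qed.

Lemma chk2 n : (2 <= n)%N -> forall a b : nat, (a < n + n)%N -> (b < n)%N -> Zinv n 1 a b ->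
  if (a == 0) || (a == 1) then ((a == 1) && (b == 0)) || (Z1 n 0 b && Z1 n 1 b) else Z1 n a b.
Proof. move=> hn; zcheck. Qed.

Lemma chka n i : (1 <= i < n)%N -> forall a b : nat, (a < n + n)%N -> (b < n)%N -> Za n i a b ->
  if (a == n) || (a == n + i) then ((a == n + i) && (b == i)) || (Zinv n i n b && Zinv n i (n + i) b) else Zinv n i a b.
Proof. move=> hn; zcheck. Qed.

Lemma chkb n i : (1 <= i < n)%N -> forall a b : nat, (a < n + n)%N -> (b < n)%N -> Zb n i a b ->
  if (a == i) || (a == n) then ((a == n) && (b == i)) || (Za n i i b && Za n i n b) else Za n i a b.
Proof. move=> hn; zcheck. Qed.

Lemma chkc n i : (1 <= i)%N -> (i < n.-1)%N -> forall a b : nat, (a < n + n)%N -> (b < n)%N -> Zinv n i.+1 a b ->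
  if (a == i) || (a == i.+1) then ((a == i.+1) && (b == i)) || (Zb n i i b && Zb n i i.+1 b) else Zb n i a b.
Proof. move=> hn hi; zcheck. Qed.

Lemma chkd n i : (1 <= i)%N -> i.+1 = n -> forall a b : nat, (a < n + n)%N -> (b < n)%N -> Zinv n i.+1 a b -> Zb n i a b.
Proof. move=> h1 h2 a b ha hb; rewrite /Zinv /Zb; lia. Qed.
End Chk.

Lemma ST_init (R : rcfType) n (A : 'M[R]_n) : tridiagonal A -> ST A (Z0 n) 1%:M (col_mx A 1%:M).
Proof.
move=> tA; split; first by rewrite mul1mx.
split; first by rewrite trmx1 mulmx1.
move=> a b; rewrite /Z0 mxE; case: splitP => [i hi|j hi]; rewrite hi.
- move=> h; apply: tA; move: h (ltn_ord i); lia.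
- move=> h; rewrite mxE.
  have -> : (j == b) = false by apply/negP => /eqP jb; move: h; rewrite jb; lia.
  by [].
Qed.

Lemma loop (R : rcfType) n (A : 'M[R]_n) Q' Rm' (m : nat) : forall i Q Rm,
  (1 <= i)%N -> (i + m = n)%N -> ST A (Zinv n i) Q Rm ->
  alg1_run (flatten [seq [:: (n, n + j, j); (j, n, j)]%N ++
               (if (j < n.-1)%N then [:: (j, j.+1, j)] else [::])
          | j <- iota i m]) Q Rm Q' Rm' -> ST A (Zinv n n) Q' Rm'.
Proof.
elim: m => [|m IH] i Q Rm hi him hST.
  by rewrite addn0 in him; subst i => -[-> ->].
have hin : (i < n)%N by lia.
move=> hrun.
have E : flatten [seq [:: (n, n + j, j); (j, n, j)]%N ++
               (if (j < n.-1)%N then [:: (j, j.+1, j)] else [::])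
          | j <- iota i m.+1] = (n, n + i, i)%N :: (i, n, i) :: ((if (i < n.-1)%N then [:: (i, i.+1, i)] else [::]) ++ flatten [seq [:: (n, n + j, j); (j, n, j)]%N ++
               (if (j < n.-1)%N then [:: (j, j.+1, j)] else [::])
          | j <- iota i.+1 m]) by [].
rewrite E in hrun.
have h1 : (1 <= i < n)%N by lia.
have h2 : n != (n + i)%N by lia.
have h3 : (n < n + n)%N by lia.
have h4 : (n + i < n + n)%N by lia.
have h5 : i != n by lia.
have h6 : (i < n + n)%N by lia.
have [Q1 [R1 [S1 r1]]] := step_lemma h2 h3 h4 (chka h1) hST hrun.
have [Q2 [R2 [S2 r2]]] := step_lemma h5 h6 h3 (chkb h1) S1 r1.
case: ifP r2 => hc r2.
- rewrite cat1s in r2.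
  have h7 : i != i.+1 by lia.
  have h8 : (i.+1 < n + n)%N by lia.
  have [Q3 [R3 [S3 r3]]] := step_lemma h7 h6 h8 (chkc hi hc) S2 r2.
  apply: (IH i.+1 Q3 R3 _ _ S3 r3); lia.
- rewrite cat0s in r2.
  have hn : i.+1 = n by move/negbT: hc; rewrite -leqNgt; lia.
  apply: (IH i.+1 Q2 R2 _ _ _ r2); [lia | lia |].
  apply: ST_weaken S2; exact: chkd.
Qed.

Lemma alg1_ST (R : rcfType) n (A : 'M[R]_n) Q : (2 <= n)%N -> tridiagonal A -> alg1_output A Q ->
  exists Rm, ST A (Zinv n n) Q Rm.
Proof.
move=> hn tA [Rm hrun]; exists Rm.
rewrite /alg1_steps !cat_cons cat0s in hrun.
have h1 : 0%N != n by lia.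
have h2 : (0 < n + n)%N by lia.
have h3 : (n < n + n)%N by lia.
have h4 : 0%N != 1%N by [].
have h5 : (1 < n + n)%N by lia.
have [Q1 [R1 [S1 r1]]] := step_lemma h1 h2 h3 (chk1 hn) (ST_init tA) hrun.
have [Q2 [R2 [S2 r2]]] := step_lemma h4 h2 h5 (chk2 hn) S1 r1.
apply: (loop (m := n.-1) (i := 1) _ _ S2 r2); lia.
Qed.

Lemma diag_props (F : fieldType) N (al : 'I_N -> bool) :
  let D := diag_mx (\row_i (al i)%:R : 'rV[F]_N) in
  let E := diag_mx (\row_i (~~ al i)%:R : 'rV[F]_N) in
  [/\ D + E = 1%:M, D *m D = D, E *m E = E, D *m E = 0 & E *m D = 0].
Proof.
move=> D E; split; apply/matrixP => i j; rewrite ?mul_diag_mx !mxE;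
  by case: (al i); case: (i == j); rewrite /= ?(mulr1n, mulr0n, addr0, add0r, mul1r, mul0r).
Qed.

Lemma DKE_entry (F : fieldType) N (al : 'I_N -> bool) (K : 'M[F]_N) a b :
  (diag_mx (\row_i (al i)%:R) *m K *m diag_mx (\row_i (~~ al i)%:R)) a b =
  (al a)%:R * K a b * (~~ al b)%:R.
Proof. by rewrite mul_diag_mx mul_mx_diag !mxE. Qed.

Lemma delta_mul_entry (F : fieldType) N (r : 'I_N) (X : 'M[F]_N) a b :
  (delta_mx r r *m X) a b = (a == r)%:R * X r b.
Proof.
rewrite mxE (bigD1 r) //= big1 ?addr0 => [|c cr]; rewrite mxE.
  by rewrite eqxx andbT.
by rewrite (negbTE cr) andbF mul0r.
Qed.

Lemma rank_DKE (F : fieldType) N (K : 'M[F]_N) (al : 'I_N -> bool) (r1 r2 : 'I_N) :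
  r1 != r2 ->
  (forall a b, al a -> ~~ al b -> a != r1 -> a != r2 -> K a b = 0) ->
  (\rank (diag_mx (\row_i (al i)%:R) *m K *m diag_mx (\row_i (~~ al i)%:R)) <= 2)%N.
Proof.
move=> r12 hK.
set X := (diag_mx _ *m K *m _).
have -> : X = delta_mx r1 r1 *m X + delta_mx r2 r2 *m X.
  apply/matrixP => a b; rewrite [RHS]mxE !delta_mul_entry.
  case: (eqVneq a r1) => [->|ar1]; first by rewrite (negbTE r12) mul1r mul0r addr0.
  case: (eqVneq a r2) => [->|ar2]; first by rewrite mul1r mul0r add0r.
  rewrite !mul0r addr0 /X DKE_entry.
  case ha: (al a); last by rewrite !mul0r.
  case hb: (al b); first by rewrite mulr0.
  by rewrite hK ?hb // mulr0 mul0r.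
apply: leq_trans (mxrank_add _ _) _.
have := mxrankM_maxl (delta_mx r1 r1) X; have := mxrankM_maxl (delta_mx r2 r2) X.
rewrite !mxrank_delta; lia.
Qed.

Lemma final_bound (F : fieldType) n (K L : 'M[F]_(n + n)) (al : 'I_(n + n) -> bool) m1 m2
  (f : 'I_m1 -> 'I_n) (g : 'I_m2 -> 'I_n) :
  K *m L = 1%:M -> (forall i, al (lshift n (f i))) -> (forall j, ~~ al (rshift n (g j))) ->
  (\rank (diag_mx (\row_i (al i)%:R) *m K *m diag_mx (\row_i (~~ al i)%:R)) <= 2)%N ->
  (\rank (mxsub f g (ursubmx L)) <= 2)%N.
Proof.
move=> KL hf hg hK.
have -> : mxsub f g (ursubmx L) = mxsub (fun i => lshift n (f i)) (fun j => rshift n (g j))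
   (diag_mx (\row_i (al i)%:R) *m L *m diag_mx (\row_i (~~ al i)%:R)).
  apply/matrixP => i j; rewrite [RHS]mxE DKE_entry !mxE /= hf.
  by have := hg j; case: (al _) => //= _; rewrite mul1r mulr1.
apply: leq_trans (rank_mxsub _ _ _) _; apply: leq_trans hK.
have [h1 h2 h3 h4 h5] := diag_props F al.
exact: rank_inv_block.
Qed.

Lemma K_zero1 (R : rcfType) n (A : 'M[R]_n) (k : nat) : tridiagonal A -> (1 <= k < n)%N ->
  forall a b : 'I_(n + n), (((a < n) && (a <= k)) || ((n <= a) && (a < n + k)))%N ->
    ~~ (((b < n) && (b <= k)) || ((n <= b) && (b < n + k)))%N ->
    (a != (k - 1)%N :> nat) -> (a != k :> nat) ->
    block_mx 1%:M (- A) A^T 1%:M a b = 0.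
Proof.
move=> tA hk a b Ha Hb H1 H2; have Ha0 := ltn_ord a; have Hb0 := ltn_ord b.
rewrite /block_mx mxE; case: splitP => i hi; rewrite mxE; case: splitP => j hj; rewrite !mxE;
  rewrite hi in Ha H1 H2 Ha0; rewrite hj in Hb Hb0; have hi0 := ltn_ord i; have hj0 := ltn_ord j.
- have -> : (i == j) = false by apply/negP => /eqP e; subst; lia.
  by [].
- have -> : A i j = 0 by apply: tA; lia.
  by rewrite oppr0.
- by rewrite tA //; lia.
- have -> : (i == j) = false by apply/negP => /eqP e; subst; lia.
  by [].
Qed.

Lemma K_zero2 (R : rcfType) n (A : 'M[R]_n) (k : nat) : tridiagonal A -> (1 <= k < n)%N ->
  forall a b : 'I_(n + n), (((a < n) && (k - 1 <= a)) || ((n <= a) && (n + k <= a)))%N ->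
    ~~ (((b < n) && (k - 1 <= b)) || ((n <= b) && (n + k <= b)))%N ->
    (a != (k - 1)%N :> nat) -> (a != k :> nat) ->
    block_mx 1%:M (- A) A^T 1%:M a b = 0.
Proof.
move=> tA hk a b Ha Hb H1 H2; have Ha0 := ltn_ord a; have Hb0 := ltn_ord b.
rewrite /block_mx mxE; case: splitP => i hi; rewrite mxE; case: splitP => j hj; rewrite !mxE;
  rewrite hi in Ha H1 H2 Ha0; rewrite hj in Hb Hb0; have hi0 := ltn_ord i; have hj0 := ltn_ord j.
- have -> : (i == j) = false by apply/negP => /eqP e; subst; lia.
  by [].
- have -> : A i j = 0 by apply: tA; lia.
  by rewrite oppr0.
- by rewrite tA //; lia.
- have -> : (i == j) = false by apply/negP => /eqP e; subst; lia.
  by [].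
Qed.

Theorem theorem4p2 (R : rcfType) (n : nat) (A : 'M[R]_n) (Q : 'M[R]_(n + n)) :
  (2 <= n)%N -> tridiagonal A -> alg1_output A Q ->
  let M := ulsubmx Q *m (dlsubmx Q)^T in
  forall k : 'I_n, (1 <= k)%N ->
    (\rank (mxsub (@first_idx n k) (@last_idx n k) M) <= 2)%N /\
    (\rank (mxsub (@last_idx n k) (@first_idx n k) M) <= 2)%N.
Proof.
move=> hn tA hout M k hk.
have [Rm [hQR [hO hI]]] := alg1_ST hn tA hout.
have hd : dsubmx Rm = 0.
  apply/matrixP => i j; rewrite !mxE; apply: hI; rewrite /Zinv /=.
  have := ltn_ord i; have := ltn_ord j; lia.
have [hQ1 hQ2] : ulsubmx Q *m usubmx Rm = A /\ dlsubmx Q *m usubmx Rm = 1%:M.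
  move: hQR; rewrite -[Q]submxK -[Rm]vsubmxK hd mul_block_col !mulmx0 !addr0.
  rewrite !block_mxKul !block_mxKdl col_mxKu.
  by move/eq_col_mx.
have hO1 : (ulsubmx Q)^T *m ulsubmx Q + (dlsubmx Q)^T *m dlsubmx Q = 1%:M.
  move: hO; rewrite -{1 2}[Q]submxK tr_block_mx mulmx_block [1%:M](scalar_mx_block n n).
  by case/eq_block_mx.
move: hQ1 hQ2 hO1 @M; set Q1 := ulsubmx Q; set Q2 := dlsubmx Q; set R1 := usubmx Rm.
move=> hQ1 hQ2 hO1 M.
have hR1Q2 : R1 *m Q2 = 1%:M := mulmx1C hQ2.
have AQ2 : A *m Q2 = Q1 by rewrite -hQ1 -mulmxA hR1Q2 mulmx1.
have AtQ1 : A^T *m Q1 = R1^T - Q2.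
  rewrite -{1}hQ1 trmx_mul -mulmxA.
  have -> : Q1^T *m Q1 = 1%:M - Q2^T *m Q2 by rewrite -hO1 addrK.
  by rewrite mulmxBr mulmx1 mulmxA -trmx_mul hQ2 trmx1 mul1mx.
pose K : 'M[R]_(n + n) := block_mx 1%:M (- A) A^T 1%:M.
pose L : 'M[R]_(n + n) := block_mx (1%:M - Q1 *m Q1^T) (Q1 *m Q2^T) (- (Q2 *m Q1^T)) (Q2 *m Q2^T).
have KL : K *m L = 1%:M.
  rewrite /K /L mulmx_block [RHS](scalar_mx_block n n); congr block_mx.
  - by rewrite mul1mx mulNmx mulmxN opprK mulmxA AQ2 subrK.
  - by rewrite mul1mx mulNmx mulmxA AQ2 subrr.
  - rewrite mul1mx mulmxBr mulmx1 mulmxA AtQ1 mulmxBl -{1}hQ1 trmx_mul.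
    by rewrite opprB addrCA subrr addr0 subrr.
  - by rewrite mulmxA AtQ1 mulmxBl mul1mx subrK -trmx_mul hQ2 trmx1.
have hM : M = ursubmx L by rewrite /L block_mxKur.
have k1 : (k.-1 < n + n)%N by have := ltn_ord k; lia.
have k2 : (k < n + n)%N by have := ltn_ord k; lia.
have r12 : Ordinal k1 != Ordinal k2 by rewrite -val_eqE /=; lia.
have hkn : (1 <= k < n)%N by rewrite hk ltn_ord.
rewrite hM; split.
- apply: (final_bound (al := fun a : 'I_(n + n) => (((a < n) && (a <= k)) || ((n <= a) && (a < n + k)))%N) KL).
  + move=> i /=; have := ltn_ord i; lia.
  + move=> j /=; have := ltn_ord j; lia.
  apply: (rank_DKE r12) => a b ha hb har1 har2.
  apply: (K_zero1 tA hkn ha hb).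
  + by apply: contra har1 => /eqP e; apply/eqP/ord_inj => /=; lia.
  + by apply: contra har2 => /eqP e; apply/eqP/ord_inj => /=; lia.
- apply: (final_bound (al := fun a : 'I_(n + n) => (((a < n) && (k - 1 <= a)) || ((n <= a) && (n + k <= a)))%N) KL).
  + move=> i /=; have := ltn_ord i; lia.
  + move=> j /=; have := ltn_ord j; lia.
  apply: (rank_DKE r12) => a b ha hb har1 har2.
  apply: (K_zero2 tA hkn ha hb).
  + by apply: contra har1 => /eqP e; apply/eqP/ord_inj => /=; lia.
  + by apply: contra har2 => /eqP e; apply/eqP/ord_inj => /=; lia.
Qed.
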